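(* Let $A\in\mathbb{Z}^{d\times n}$, let $\prec$ be a term ordering on $\mathbb{Z}_{\ge0}^n$, let $\mathcal{R}$ be a Gröbner basis of $A$ with respect to $\prec$, and let $\mathbf{b}\in\mathbb{Z}^d$. Then there exist a matrix $A'\in\mathbb{Z}^{2d\times(n+d)}$, a term ordering $\prec'$ on $\mathbb{Z}_{\ge0}^{n+d}$ and a Gröbner basis $\mathcal{R}'$ of $A'$ with respect to $\prec'$ such that for every $N\in\mathbb{Z}_{\ge0}$ there exists $\mathbf{b}'\in\mathbb{Z}^{2d}$ with all entries at least $N$ such that the fiber graphs $G_{A',\mathbf{b}',\mathcal{R}'}$ and $G_{A,\mathbf{b},\mathcal{R}}$ are isomorphic.
   Context: For $A\in\mathbb{Z}^{d\times n}$ and $\mathbf{b}\in\mathbb{Z}^d$, the fiber is $\mathcal{F}_A(\mathbf{b})=\{\mathbf{u}\in\mathbb{Z}^n_{\ge0}:A\mathbf{u}=\mathbf{b}\}$; for $\mathcal{M}\subset\mathbb{Z}^n$ the fiber graph $G_{A,\mathbf{b},\mathcal{M}}$ is the graph on $\mathcal{F}_A(\mathbf{b})$ in which distinct $\mathbf{u},\mathbf{v}$ are adjacent iff $\mathbf{u}-\mathbf{v}\in\mathcal{M}$ or $\mathbf{v}-\mathbf{u}\in\mathcal{M}$. A term ordering on $\mathbb{Z}_{\ge0}^n$ is a total well-order compatible with addition. The toric ideal of $A$ is $I_A=\langle\mathbf{x}^{\mathbf{u}^+}-\mathbf{x}^{\mathbf{u}^-}:\mathbf{u}\in\ker(A)\cap\mathbb{Z}^n\rangle\subset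 K[x_1,\dots,x_n]$ ($\mathbf{u}^\pm$ the positive/negative parts). A Gröbner basis of $A$ with respect to $\prec$ is a finite set $\mathcal{R}\subset\ker(A)\cap\mathbb{Z}^n$ such that $\{\mathbf{x}^{\mathbf{u}^+}-\mathbf{x}^{\mathbf{u}^-}:\mathbf{u}\in\mathcal{R}\}$ is a Gröbner basis of $I_A$ with respect to $\prec$. *)

(* Defs.v *)
From HB Require Import structures.
From mathcomp Require Import all_boot all_order all_algebra.
From mathcomp Require Import mpoly.
Set Implicit Arguments. Unset Strict Implicit. Unset Printing Implicit Defensive.
Import Order.TTheory GRing.Theory Num.Theory.
Local Open Scope ring_scope.

Definition term_ordering (n : nat) (le : rel 'X_{1..n}) : Prop :=
  [/\ reflexive le, antisymmetric le, transitive le & total le] /\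
  ((forall a b c : 'X_{1..n}, le a b -> le (a + c)%MM (b + c)%MM)
   /\ well_founded (fun a b : 'X_{1..n} => (a != b) && le a b)).

Definition pos_part (n : nat) (u : 'cV[int]_n) : 'X_{1..n} :=
  [multinom `|Num.max (u i ord0) (0:int)|%N | i < n].
Definition neg_part (n : nat) (u : 'cV[int]_n) : 'X_{1..n} :=
  [multinom `|Num.max (- u i ord0)%R (0:int)|%N | i < n].

Definition binom (K : fieldType) (n : nat) (u : 'cV[int]_n) : {mpoly K[n]} :=
  'X_[pos_part u] - 'X_[neg_part u].

Definition in_kernel (d n : nat) (A : 'M[int]_(d, n)) (u : 'cV[int]_n) : Prop :=
  A *m u = 0.

Definition toric_ideal (K : fieldType) (d n : nat) (A : 'M[int]_(d, n))
  (f : {mpoly K[n]}) : Prop :=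
  exists s : seq ({mpoly K[n]} * 'cV[int]_n),
    (forall x, x \in s -> in_kernel A x.2) /\
    f = \sum_(x <- s) x.1 * binom K x.2.

Definition leading_monomial (K : fieldType) (n : nat) (le : rel 'X_{1..n})
  (p : {mpoly K[n]}) (m : 'X_{1..n}) : Prop :=
  m \in msupp p /\ (forall m', m' \in msupp p -> le m' m).

Definition mon_divides (n : nat) (m1 m2 : 'X_{1..n}) : Prop :=
  forall i : 'I_n, (m1 i <= m2 i)%N.

Definition is_groebner_basis (K : fieldType) (n : nat) (le : rel 'X_{1..n})
  (I : {mpoly K[n]} -> Prop) (G : {mpoly K[n]} -> Prop) : Prop :=
  (forall g, G g -> I g) /\
  (forall f, I f -> f != 0 -> forall m, leading_monomial le f m ->
     exists g mg, [/\ G g, leading_monomial le g mg & mon_divides mg m]).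

Definition groebner_basis_of (K : fieldType) (d n : nat) (A : 'M[int]_(d, n))
  (le : rel 'X_{1..n}) (R : seq 'cV[int]_n) : Prop :=
  (forall u, u \in R -> in_kernel A u) /\
  @is_groebner_basis K n le (@toric_ideal K d n A)
     (fun g => exists2 u, u \in R & g = binom K u).

Definition fiber (d n : nat) (A : 'M[int]_(d, n)) (b : 'cV[int]_d) :=
  {u : 'cV[int]_n | [forall i, 0 <= u i 0] && (A *m u == b)}.

Definition fiber_adj (d n : nat) (A : 'M[int]_(d, n)) (b : 'cV[int]_d)
  (M : seq 'cV[int]_n) (u v : fiber A b) : Prop :=
  val u != val v /\ ((val u - val v) \in M \/ (val v - val u) \in M).

Definition fiber_graphs_isomorphic (d1 n1 d2 n2 : nat)
  (A1 : 'M[int]_(d1, n1)) (b1 : 'cV[int]_d1) (M1 : seq 'cV[int]_n1)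
  (A2 : 'M[int]_(d2, n2)) (b2 : 'cV[int]_d2) (M2 : seq 'cV[int]_n2) : Prop :=
  exists f : fiber A1 b1 -> fiber A2 b2,
    bijective f /\
    (forall u v, fiber_adj M1 u v <-> fiber_adj M2 (f u) (f v)).

(* Main.v *)
Require Import Defs.
From HB Require Import structures.
From mathcomp Require Import all_boot all_order all_algebra.
From mathcomp Require Import mpoly.
Set Implicit Arguments. Unset Strict Implicit. Unset Printing Implicit Defensive.
Import Order.TTheory GRing.Theory Num.Theory.
Local Open Scope ring_scope.

Lemma split_lshift m n (i : 'I_m) : split (lshift n i) = inl i.
Proof. exact: (unsplitK (inl i)). Qed.
Lemma split_rshift m n (i : 'I_n) : split (rshift m i) = inr i.
Proof. exact: (unsplitK (inr i)). Qed.

Definition xpart (n d : nat) (m : 'X_{1..n + d}) : 'X_{1..n} :=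
  [multinom m (lshift d i) | i < n].
Definition ypart (n d : nat) (m : 'X_{1..n + d}) : 'X_{1..d} :=
  [multinom m (rshift n j) | j < d].
Definition mjoin (n d : nat) (a : 'X_{1..n}) (b : 'X_{1..d}) : 'X_{1..n + d} :=
  [multinom (match split i with inl j => a j | inr j => b j end) | i < n + d].

Lemma xpart_join n d a b : xpart (@mjoin n d a b) = a.
Proof. by apply/mnmP => i; rewrite !mnmE split_lshift. Qed.
Lemma ypart_join n d a b : ypart (@mjoin n d a b) = b.
Proof. by apply/mnmP => i; rewrite !mnmE split_rshift. Qed.
Lemma join_part n d (m : 'X_{1..n + d}) : mjoin (xpart m) (ypart m) = m.
Proof.
apply/mnmP => i; rewrite mnmE; have := splitK i.
by case: (split i) => j /= <-; rewrite mnmE.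
Qed.
Lemma mpart_eq n d (m1 m2 : 'X_{1..n + d}) :
  (m1 == m2) = (xpart m1 == xpart m2) && (ypart m1 == ypart m2).
Proof.
apply/eqP/andP => [->|[/eqP h1 /eqP h2]]; first by rewrite !eqxx.
by rewrite -(join_part m1) -(join_part m2) h1 h2.
Qed.
Lemma join_eq n d a b a' b' :
  (@mjoin n d a b == mjoin a' b') = (a == a') && (b == b').
Proof. by rewrite mpart_eq !xpart_join !ypart_join. Qed.
Lemma xpartD n d (m1 m2 : 'X_{1..n + d}) : xpart (m1 + m2) = (xpart m1 + xpart m2)%MM.
Proof. by apply/mnmP => i; rewrite !(mnmE, mnmDE). Qed.
Lemma ypartD n d (m1 m2 : 'X_{1..n + d}) : ypart (m1 + m2) = (ypart m1 + ypart m2)%MM.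
Proof. by apply/mnmP => i; rewrite !(mnmE, mnmDE). Qed.
Lemma joinD n d (m : 'X_{1..n + d}) a b :
  (m + mjoin a b)%MM = mjoin (xpart m + a)%MM (ypart m + b)%MM.
Proof. by apply/eqP; rewrite mpart_eq xpartD ypartD !xpart_join !ypart_join !eqxx. Qed.

Definition lexy (n d : nat) (le : rel 'X_{1..n}) : rel 'X_{1..n + d} :=
  fun a b => if xpart a == xpart b then (ypart a <= ypart b)%O
             else le (xpart a) (xpart b).

Lemma lexy_term n d (le : rel 'X_{1..n}) :
  term_ordering le -> term_ordering (@lexy n d le).
Proof.
move=> [[lrefl lanti ltrans ltot] [ladd lwf]].
split; [split|split].
- by move=> a; rewrite /lexy eqxx lexx.
- move=> a b /andP[]; rewrite /lexy eq_sym; case: eqP => [hx|hx] h1 h2.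
    by apply/eqP; rewrite mpart_eq hx eqxx /= eq_le h1 h2.
  by case: hx; apply: lanti; rewrite h1 h2.
- move=> b a c; rewrite /lexy.
  case: (eqVneq (xpart a) (xpart b)) => hab;
  case: (eqVneq (xpart b) (xpart c)) => hbc;
  case: (eqVneq (xpart a) (xpart c)) => hac //.
  + by apply: le_trans.
  + by rewrite hab hbc eqxx in hac.
  + by rewrite -hab hac eqxx in hbc.
  + by rewrite hab.
  + by rewrite hac -hbc eqxx in hab.
  + by rewrite -hbc.
  + move=> h1 h2; rewrite hac in h1.
    by have := lanti (xpart b) (xpart c); rewrite h1 h2 => /(_ isT) e; rewrite e eqxx in hbc.
  + exact: ltrans.
- move=> a b; rewrite /lexy eq_sym; case: eqP => _; [exact: le_total|exact: ltot].
- move=> a b c; rewrite /lexy !xpartD !ypartD.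
  case: eqP => [->|hx]; first by rewrite eqxx lemc_add2l.
  case: eqP => [/addIm hx'|_] //; exact: ladd.
- pose R (a b : 'X_{1..n + d}) := (a != b) && lexy le a b.
  suff H : forall x y (m : 'X_{1..n+d}), xpart m = x -> ypart m = y -> Acc R m.
    by move=> m; exact: (H _ _ m erefl erefl).
  move=> x; elim/(well_founded_induction lwf): x => x IHx y.
  elim/(well_founded_induction (@ltom_wf d)): y => y IHy m hx hy.
  constructor => m' /andP[hne]; rewrite /lexy hx hy.
  case: eqP => [hx'|/eqP hx'] h.
    apply: (IHy (ypart m')) => //; rewrite lt_neqAle h andbT.
    by apply: contra hne => /eqP hyy; rewrite mpart_eq hx hy hx' hyy !eqxx.
  by apply: (IHx (xpart m')) => //; rewrite /= hx' h.
Qed.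

Definition cf (K : fieldType) (n d : nat) (b : 'X_{1..d}) (f : {mpoly K[n + d]})
  : {mpoly K[n]} :=
  \sum_(m <- msupp f | ypart m == b) f@_m *: 'X_[xpart m].

Lemma cfE (K : fieldType) n d b (f : {mpoly K[n + d]}) a :
  (cf b f)@_a = f@_(mjoin a b).
Proof.
rewrite /cf (raddf_sum (mcoeff a)) [in RHS](mpolyE f) (raddf_sum (mcoeff _)) /= big_mkcond /=.
apply: eq_bigr => m _; rewrite !mcoeffZ !mcoeffX.
rewrite -[in m == _](join_part m) join_eq andbC.
by case: (ypart m == b); rewrite ?mulr0.
Qed.

Lemma cfD (K : fieldType) n d b (p q : {mpoly K[n + d]}) : cf b (p + q) = cf b p + cf b q.
Proof. by apply/mpolyP => a; rewrite mcoeffD !cfE mcoeffD. Qed.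
Lemma cf0 (K : fieldType) n d b : cf b (0 : {mpoly K[n + d]}) = 0.
Proof. by apply/mpolyP => a; rewrite cfE !mcoeff0. Qed.
Lemma cfZ (K : fieldType) n d b c (p : {mpoly K[n + d]}) : cf b (c *: p) = c *: cf b p.
Proof. by apply/mpolyP => a; rewrite mcoeffZ !cfE mcoeffZ. Qed.
Lemma cf_sum (K : fieldType) n d b (I : Type) (r : seq I) (F : I -> {mpoly K[n + d]}) :
  cf b (\sum_(i <- r) F i) = \sum_(i <- r) cf b (F i).
Proof.
elim: r => [|x r IH]; first by rewrite !big_nil cf0.
by rewrite !big_cons cfD IH.
Qed.

Lemma toric0 (K : fieldType) d n (A : 'M[int]_(d, n)) : toric_ideal A (0 : {mpoly K[n]}).
Proof. by exists [::]; rewrite big_nil. Qed.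
Lemma toricD (K : fieldType) d n (A : 'M[int]_(d, n)) (p q : {mpoly K[n]}) :
  toric_ideal A p -> toric_ideal A q -> toric_ideal A (p + q).
Proof.
move=> [s [hs ->]] [t [ht ->]]; exists (s ++ t); split; last by rewrite big_cat.
by move=> x; rewrite mem_cat => /orP[/hs|/ht].
Qed.
Lemma toricZ (K : fieldType) d n (A : 'M[int]_(d, n)) c (p : {mpoly K[n]}) :
  toric_ideal A p -> toric_ideal A (c *: p).
Proof.
move=> [s [hs ->]]; exists [seq (c *: x.1, x.2) | x <- s]; split.
  by move=> x /mapP[y /hs hy ->].
by rewrite big_map scaler_sumr; apply: eq_bigr => x _; rewrite scalerAl.
Qed.
Lemma toricM (K : fieldType) d n (A : 'M[int]_(d, n)) (h : {mpoly K[n]}) u :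
  in_kernel A u -> toric_ideal A (h * binom K u).
Proof.
by move=> hu; exists [:: (h, u)]; split; [move=> x; rewrite inE => /eqP ->|rewrite big_seq1].
Qed.
Lemma toric_sum (K : fieldType) d n (A : 'M[int]_(d, n)) (I : eqType) (r : seq I) (F : I -> {mpoly K[n]}) :
  (forall i, i \in r -> toric_ideal A (F i)) -> toric_ideal A (\sum_(i <- r) F i).
Proof.
elim: r => [|x r IH] h; first by rewrite big_nil; exact: toric0.
rewrite big_cons; apply: toricD; first by apply: h; rewrite inE eqxx.
by apply: IH => i hi; apply: h; rewrite inE hi orbT.
Qed.

Lemma pos_part_col n d (u : 'cV[int]_n) :
  pos_part (col_mx u (0 : 'cV[int]_d)) = mjoin (pos_part u) 0%MM.
Proof.
apply/mnmP => i; rewrite !mnmE; have := splitK i.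
case: (split i) => j /= <-; rewrite ?col_mxEu ?col_mxEd ?mnmE ?mxE //.
Qed.
Lemma neg_part_col n d (u : 'cV[int]_n) :
  neg_part (col_mx u (0 : 'cV[int]_d)) = mjoin (neg_part u) 0%MM.
Proof.
apply/mnmP => i; rewrite !mnmE; have := splitK i.
case: (split i) => j /= <-; rewrite ?col_mxEu ?col_mxEd ?mnmE ?mxE //.
Qed.

Lemma binom_col_coef (K : fieldType) n d (u : 'cV[int]_n) a (y : 'X_{1..d}) :
  (binom K (col_mx u (0 : 'cV[int]_d)))@_(mjoin a y) = (y == 0%MM)%:R * (binom K u)@_a.
Proof.
rewrite /binom pos_part_col neg_part_col !mcoeffB !mcoeffX !join_eq.
by rewrite ![(0%MM == y)]eq_sym; case: (y == 0%MM); rewrite ?andbT ?andbF ?mul1r ?mul0r ?subrr.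
Qed.

Lemma cf_Xbinom (K : fieldType) n d (u : 'cV[int]_n) (y : 'X_{1..d}) m :
  cf y ('X_[m] * binom K (col_mx u (0 : 'cV[int]_d))) =
  (ypart m == y)%:R *: ('X_[xpart m] * binom K u).
Proof.
apply/mpolyP => a; rewrite cfE mcoeffZ /binom pos_part_col neg_part_col !mulrBr.
rewrite -!mpolyXD !mcoeffB !mcoeffX !joinD !join_eq !addm0.
by case: (ypart m == y); rewrite ?andbT ?andbF ?mul1r ?mul0r ?subrr.
Qed.

Lemma cf_toric (K : fieldType) dd n d (A : 'M[int]_(dd, n)) (u : 'cV[int]_n)
  (y : 'X_{1..d}) (h : {mpoly K[n + d]}) :
  in_kernel A u -> toric_ideal A (cf y (h * binom K (col_mx u (0 : 'cV[int]_d)))).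
Proof.
move=> hu; rewrite [h]mpolyE mulr_suml cf_sum; apply: toric_sum => m _.
by rewrite -scalerAl cfZ cf_Xbinom scalerA; apply: toricZ; apply: toricM.
Qed.
Definition e2 (d : nat) : (d + d = 2 * d)%N := etrans (addnn d) (esym (mul2n d)).

Definition Ablk d n (A : 'M[int]_(d, n)) : 'M[int]_(d + d, n + d) :=
  block_mx A 1%:M 0 1%:M.
Definition A2 d n (A : 'M[int]_(d, n)) : 'M[int]_(2 * d, n + d) :=
  castmx (e2 d, erefl) (Ablk A).

Lemma castmx_mul (R : ringType) m k p q (e : m = k) (M : 'M[R]_(m, p)) (v : 'M[R]_(p, q)) :
  castmx (e, erefl) M *m v = castmx (e, erefl) (M *m v).
Proof. by case: k / e; rewrite !castmx_id. Qed.
Lemma castmx_inj (R : Type) m k p (e : m = k) (M N : 'M[R]_(m, p)) :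
  castmx (e, erefl) M = castmx (e, erefl) N -> M = N.
Proof. by case: k / e; rewrite !castmx_id. Qed.
Lemma castmx0 (R : ringType) m k p (e : m = k) :
  castmx (e, erefl) (0 : 'M[R]_(m, p)) = 0.
Proof. by case: k / e; rewrite !castmx_id. Qed.

Lemma Ablk_mul d n (A : 'M[int]_(d, n)) (v : 'cV[int]_(n + d)) :
  Ablk A *m v = col_mx (A *m usubmx v + dsubmx v) (dsubmx v).
Proof. by rewrite /Ablk -{1}(vsubmxK v) mul_block_col !mul1mx mul0mx add0r. Qed.

Lemma A2_kernel d n (A : 'M[int]_(d, n)) (v : 'cV[int]_(n + d)) :
  in_kernel (A2 A) v -> v = col_mx (usubmx v) 0 /\ in_kernel A (usubmx v).
Proof.
rewrite /in_kernel /A2 castmx_mul -(castmx0 _ _ (e2 d)) => /castmx_inj.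
rewrite Ablk_mul -col_mx0 => /eq_col_mx [h1 h2].
by rewrite h2 addr0 in h1; split => //; rewrite -h2 vsubmxK.
Qed.

Lemma A2_kernel_col d n (A : 'M[int]_(d, n)) (u : 'cV[int]_n) :
  in_kernel A u -> in_kernel (A2 A) (col_mx u 0).
Proof.
rewrite /in_kernel /A2 castmx_mul Ablk_mul col_mxKu col_mxKd => ->.
by rewrite addr0 col_mx0 castmx0.
Qed.

Lemma A2_fiber d n (A : 'M[int]_(d, n)) (b c : 'cV[int]_d) (v : 'cV[int]_(n + d)) :
  (A2 A *m v == castmx (e2 d, erefl) (col_mx (b + c) c)) =
  (A *m usubmx v == b) && (dsubmx v == c).
Proof.
rewrite /A2 castmx_mul Ablk_mul.
apply/eqP/andP => [/castmx_inj/eq_col_mx [h1 h2]|[/eqP h1 /eqP h2]].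
  by rewrite h2 in h1; split; apply/eqP => //; apply: (addIr c).
by rewrite h1 h2.
Qed.

Lemma A2_groebner (K : fieldType) d n (A : 'M[int]_(d, n)) le (R : seq 'cV[int]_n) :
  term_ordering le -> groebner_basis_of K A le R ->
  groebner_basis_of K (A2 A) (@lexy n d le) [seq col_mx u (0 : 'cV[int]_d) | u <- R].
Proof.
move=> [[lrefl _ _ _] _] [hR1 [_ hR2]].
split; first by move=> v /mapP [u hu ->]; apply: A2_kernel_col; apply: hR1.
split.
  move=> g [v /mapP[u hu ->] ->]; exists [:: (1, col_mx u 0)]; split.
    by move=> x; rewrite inE => /eqP -> /=; apply: A2_kernel_col; apply: hR1.
  by rewrite big_seq1 mul1r.
move=> f [s [hs hf]] fne m [hm hmax].
set a := xpart m; set y := ypart m.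
have tg : toric_ideal A (cf y f).
  rewrite hf cf_sum; apply: toric_sum => x /hs /A2_kernel [h1 hk]; rewrite h1.
  exact: cf_toric.
have cfa : (cf y f)@_a = f@_m by rewrite cfE /a /y join_part.
have lm : leading_monomial le (cf y f) a.
  split; first by rewrite mcoeff_msupp cfa -mcoeff_msupp.
  move=> a'; rewrite mcoeff_msupp cfE -mcoeff_msupp => /hmax.
  by rewrite /lexy xpart_join -/a; case: eqP => [-> _|_ //]; apply: lrefl.
have gne : cf y f != 0.
  by apply/eqP => h0; move: hm; rewrite mcoeff_msupp -cfa h0 mcoeff0 eqxx.
have [g [mg [[u hu ->] lmg dv]]] := hR2 _ tg gne a lm.
exists (binom K (col_mx u 0)), (mjoin mg 0%MM); split.
- by exists (col_mx u 0) => //; apply: map_f.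
- split; first by rewrite mcoeff_msupp binom_col_coef eqxx mul1r -mcoeff_msupp; case: lmg.
  move=> m'; rewrite -(join_part m') mcoeff_msupp binom_col_coef.
  case: (eqVneq (ypart m') 0%MM) => [hy|_]; last by rewrite mul0r eqxx.
  rewrite mul1r -mcoeff_msupp => /(proj2 lmg) h.
  by rewrite /lexy !xpart_join !ypart_join hy; case: eqP => // _; exact: lexx.
- move=> i; rewrite mnmE; have := splitK i; case: (split i) => j /= <-.
    by have := dv j; rewrite /a mnmE.
  by rewrite mnm0E.
Qed.
Lemma bnd (N : nat) (x : int) : N%:Z <= x + (N%:Z + `|x|).
Proof.
rewrite addrCA lerDl; have := lerNnormlW (lexx `|x|).
by rewrite -subr_ge0 opprK.
Qed.

Theorem theorem1 (K : fieldType) (d n : nat) (A : 'M[int]_(d, n))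
  (le : rel 'X_{1..n}) (R : seq 'cV[int]_n) (b : 'cV[int]_d) :
  term_ordering le -> groebner_basis_of K A le R ->
  exists (A' : 'M[int]_(2 * d, n + d)) (le' : rel 'X_{1..n + d})
         (R' : seq 'cV[int]_(n + d)),
    [/\ term_ordering le', groebner_basis_of K A' le' R' &
        forall N : nat, exists b' : 'cV[int]_(2 * d),
          (forall i, (N%:Z <= b' i 0)%R) /\
          fiber_graphs_isomorphic A' b' R' A b R].
Proof.
move=> hle hR.
exists (A2 A), (@lexy n d le), [seq col_mx u (0 : 'cV[int]_d) | u <- R].
split; [exact: lexy_term|exact: A2_groebner|].
move=> N.
pose c : 'cV[int]_d := \col_i (N%:Z + `|b i 0|).
have c0 : forall i, 0 <= c i 0 by move=> i; rewrite mxE addr_ge0.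
exists (castmx (e2 d, erefl) (col_mx (b + c) c)); split.
  move=> i; rewrite castmxE /=; set j := cast_ord _ i.
  have := splitK j; case: (split j) => k /= <-.
    by rewrite col_mxEu !mxE (_ : cast_ord _ _ = 0) ?bnd //; apply: val_inj.
  by rewrite col_mxEd mxE lerDl.
have Fp : forall v : fiber (A2 A) (castmx (e2 d, erefl) (col_mx (b + c) c)),
    [forall i, 0 <= usubmx (val v) i 0] && (A *m usubmx (val v) == b)
    /\ val v = col_mx (usubmx (val v)) c.
  move=> [v /= /andP[/forallP hv]]; rewrite A2_fiber => /andP[-> /eqP hc].
  split; last by rewrite -hc vsubmxK.
  by rewrite andbT; apply/forallP => i; rewrite mxE.
have Gp : forall u : fiber A b,
    [forall i, 0 <= col_mx (val u) c i 0] &&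
    (A2 A *m col_mx (val u) c == castmx (e2 d, erefl) (col_mx (b + c) c)).
  move=> [u /= /andP[/forallP hu hAu]]; rewrite A2_fiber col_mxKu col_mxKd hAu eqxx. rewrite !andbT.
  apply/forallP => i; have := splitK i; case: (split i) => k /= <-.
    by rewrite col_mxEu.
  by rewrite col_mxEd.
pose F v : fiber A b := exist _ (usubmx (val v)) (proj1 (Fp v)).
pose G u : fiber (A2 A) (castmx (e2 d, erefl) (col_mx (b + c) c)) :=
  exist _ (col_mx (val u) c) (Gp u).
exists F; split.
  exists G => [v|u]; apply: val_inj => /=; last by rewrite col_mxKu.
  by rewrite -(proj2 (Fp v)).
move=> v w; rewrite /fiber_adj /=.
rewrite [val v](proj2 (Fp v)) [val w](proj2 (Fp w)) !col_mxKu.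
set uv := usubmx _; set uw := usubmx _.
have inj : injective (fun u : 'cV[int]_n => col_mx u (0 : 'cV[int]_d)).
  by move=> x y /eq_col_mx [].
rewrite !opp_col_mx !add_col_mx subrr !(mem_map inj).
have -> : (col_mx uv c == col_mx uw c) = (uv == uw).
  by apply/eqP/eqP => [/eq_col_mx []|->].
by [].
Qed.
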